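(* For every $n\in\mathbb{N}$, \[ \sum_{j=0}^{n}\sum_{i=0}^{j}\frac{\binom{n+1}{i}}{\binom{2n+1}{j}} =\sum_{k=0}^{\lfloor n/2\rfloor}(-1)^k\frac{\binom{n+1}{2k+1}}{\binom{n}{k}} =(n+1)\sum_{k=1}^{n+1}\frac{2^k}{k\binom{n+1+k}{k}} =\frac{n+1}{2^{n+1}}\sum_{k=1}^{n+1}\frac{2^k}{k} =\frac{1}{2^n}\sum_{j=0}^{n}\sum_{i=0}^{j}\frac{\binom{n+1}{i}}{\binom{n}{j}}. \] *)

(* Defs.v *)
From HB Require Import structures.
From mathcomp Require Import all_boot all_order all_algebra.
Set Implicit Arguments. Unset Strict Implicit. Unset Printing Implicit Defensive.

(* Main.v *)
Require Import Defs.
From HB Require Import structures.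
From mathcomp Require Import all_boot all_order all_algebra.
From mathcomp Require Import ring lra.
Import Order.TTheory GRing.Theory Num.Theory.
Local Open Scope ring_scope.

Ltac nzs := repeat (apply/andP; split); rewrite ?expf_neq0 //; try (apply/negP => /eqP ?; lra).

Definition Rec (x : nat -> rat) := forall n : nat,
  2 * (n.+1)%:R * x n.+1 = 2 * (n.+1)%:R + (n.+2)%:R * x n.

Lemma rec_uniq x y : x 0%N = y 0%N -> Rec x -> Rec y -> forall n, x n = y n.
Proof.
move=> h0 hx hy; elim=> [|n IH] //.
have hn : 2 * (n.+1)%:R != 0 :> rat by rewrite mulf_neq0 // pnatr_eq0.
apply: (mulfI hn); by rewrite hx hy IH.
Qed.

Definition f4 (n : nat) : rat :=
  (n.+1)%:R / 2 ^+ n.+1 * \sum_(1 <= k < n.+2) (2 ^+ k / k%:R).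

Lemma f4_rec : Rec f4.
Proof.
move=> n; rewrite /f4 (big_nat_recr n.+2) //=.
set T := \sum_(1 <= k < n.+2) _.
rewrite !exprS.
have h2 : (2 : rat) ^+ n != 0 by rewrite expf_neq0.
have h1 : (n.+1)%:R != 0 :> rat by rewrite pnatr_eq0.
have h3 : (n.+2)%:R != 0 :> rat by rewrite pnatr_eq0.
have := ler0n rat n => ?.
field; nzs.
Qed.
From mathcomp Require Import zify.
Lemma natC n j : ('C(n, j)%:R : rat) != 0 <-> (j <= n)%N.
Proof. by rewrite pnatr_eq0 -lt0n bin_gt0. Qed.

Lemma bin_up n j : (j <= n)%N ->
  ('C(n.+1, j)%:R : rat) = (n.+1)%:R * 'C(n, j)%:R / ((n.+1)%:R - j%:R).
Proof.
move=> hj; have h := mul_bin_down n.+1 j; rewrite /= in h.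
have hn : ((n.+1)%:R - j%:R : rat) != 0 by rewrite subr_eq0 eqr_nat; lia.
apply: (mulIf hn); rewrite mulfVK // -natrB; last by lia.
rewrite -!natrM; congr (_%:R); lia.
Qed.

Lemma bin_upS n j : ('C(n.+1, j.+1)%:R : rat) = (n.+1)%:R * 'C(n, j)%:R / (j.+1)%:R.
Proof.
have h := mul_bin_diag n.+1 j; rewrite /= in h.
rewrite -natrM h natrM mulrAC divff ?mul1r // pnatr_eq0 //.
Qed.

Lemma bin_right n j : (j <= n)%N ->
  ('C(n, j.+1)%:R : rat) = 'C(n, j)%:R * (n%:R - j%:R) / (j.+1)%:R.
Proof.
move=> hj; have h := mul_bin_left n j.
rewrite -natrB // -natrM [('C(n, j) * _)%N]mulnC -h natrM [(_ * 'C(n, j.+1)%:R)]mulrC mulfK // pnatr_eq0 //.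
Qed.

Definition Pn (n j : nat) : nat := \sum_(0 <= i < j.+1) 'C(n.+1, i).

Lemma sum_bin n : (\sum_(0 <= i < n.+1) 'C(n, i) = 2 ^ n)%N.
Proof.
rewrite big_mkord; have := expnDn 1 1 n; rewrite add1n => ->.
by apply: eq_bigr => i _; rewrite !exp1n !muln1.
Qed.

Lemma Pcompl n j : (j <= n)%N -> (Pn n j + Pn n (n - j) = 2 ^ n.+1)%N.
Proof.
move=> hj; rewrite -sum_bin (big_cat_nat _ (n:=j.+1)) //=; last by lia.
congr (_ + _)%N; rewrite /Pn.
rewrite -{1}(add0n j.+1) big_addn big_nat_rev /=.
have -> : (n.+2 - j.+1 = (n - j).+1)%N by lia.
apply: eq_big_nat => i /andP [_ hi].
rewrite -(bin_sub (n := n.+1)); last by lia.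
congr 'C(_, _); lia.
Qed.

Definition U (n : nat) : rat := \sum_(0 <= j < n.+1) ('C(n, j)%:R)^-1.

Definition f5 (n : nat) : rat := 1 / 2 ^+ n * \sum_(0 <= j < n.+1) \sum_(0 <= i < j.+1)
                    ('C(n.+1, i)%:R / 'C(n, j)%:R).

Lemma f5U n : f5 n = U n.
Proof.
rewrite /f5.
have -> : \sum_(0 <= j < n.+1) \sum_(0 <= i < j.+1) ('C(n.+1, i)%:R / 'C(n, j)%:R : rat)
   = \sum_(0 <= j < n.+1) (Pn n j)%:R / 'C(n, j)%:R.
  by apply: eq_bigr => j _; rewrite -mulr_suml /Pn natr_sum.
set A := \sum_(0 <= j < n.+1) _.
have hA : A + A = 2 ^+ n.+1 * U n.
  rewrite {2}/A big_nat_rev /= /U mulr_sumr -big_split /=.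
  apply: eq_big_nat => j /andP [_ hj].
  rewrite add0n subSS bin_sub // -mulrDl -natrD Pcompl // natrX //.
have h2 : (2 : rat) ^+ n != 0 by rewrite expf_neq0.
have -> : A = 2 ^+ n * U n.
  apply: (mulfI (_ : (2 : rat) != 0)) => //.
  rewrite mulrA -exprS -hA; ring.
by rewrite mulrA mul1r mulVf // mul1r.
Qed.

Lemma U_rec : Rec U.
Proof.
move=> n.
have key : forall j, (j <= n)%N -> ('C(n.+1, j)%:R : rat)^-1 + ('C(n.+1, j.+1)%:R)^-1
    = (n.+2)%:R / ((n.+1)%:R * 'C(n, j)%:R).
  move=> j hj; rewrite bin_up ?bin_upS; last by lia.
  have hc : ('C(n, j)%:R : rat) != 0 by apply/natC.
  have hj' : (j%:R : rat) <= n%:R by rewrite ler_nat.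
  have := ler0n rat j => ?.
  field; nzs.
have : \sum_(0 <= j < n.+1) (('C(n.+1, j)%:R : rat)^-1 + ('C(n.+1, j.+1)%:R)^-1)
     = (n.+2)%:R / (n.+1)%:R * U n.
  rewrite /U mulr_sumr; apply: eq_big_nat => j /andP [_ hj]; rewrite key //.
  rewrite invfM mulrA //.
rewrite big_split /=.
have e1 : U n.+1 = \sum_(0 <= j < n.+1) ('C(n.+1, j)%:R : rat)^-1 + 1.
  by rewrite /U (big_nat_recr n.+1) //= binn invr1.
have e2 : U n.+1 = 1 + \sum_(0 <= j < n.+1) ('C(n.+1, j.+1)%:R : rat)^-1.
  by rewrite /U big_nat_recl //= bin0 invr1.
move=> h.
have hn : (n.+1)%:R != 0 :> rat by rewrite pnatr_eq0.
have := ler0n rat n => ?.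
have -> : (n.+2)%:R * U n = (n.+1)%:R * ((n.+2)%:R / (n.+1)%:R * U n) by field; nzs.
have eY : \sum_(0 <= j < n.+1) ('C(n.+1, j.+1)%:R : rat)^-1 = \sum_(0 <= j < n.+1) ('C(n.+1, j)%:R : rat)^-1.
  by apply: (addrI 1); rewrite -e2 addrC -e1.
rewrite -h eY e1; ring.
Qed.

Definition Fk (n k : nat) : rat := (-1) ^+ k * ('C(n.+1, 2 * k + 1)%:R / 'C(n, k)%:R).
Definition Hk (n k : nat) : rat :=
  - 2 * (-1) ^+ k * (1 + k%:R + n%:R + 2 * n%:R * k%:R - 2 * k%:R ^+ 2)
    * 'C(n.+1, 2 * k)%:R / ((2 * k + 1)%:R * 'C(n, k)%:R).

Lemma binSr n m : ('C(n.+1, m.+1)%:R : rat) = 'C(n, m.+1)%:R + 'C(n, m)%:R.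
Proof. by rewrite binS natrD. Qed.

Lemma H_step n k : (0 < n)%N -> (2 * k <= n)%N ->
  Hk n k.+1 - Hk n k = 2 * (n.+1)%:R * Fk n.+1 k - (n.+2)%:R * Fk n k.
Proof.
move=> hn hk; rewrite /Hk /Fk.
have hc : ('C(n, k)%:R : rat) != 0 by apply/natC; lia.
have E1 : ('C(n.+1, 2 * k + 1)%:R : rat)
   = 'C(n.+1, 2 * k)%:R * ((n.+1)%:R - (2 * k)%:R) / (2 * k).+1%:R.
  by rewrite addn1 bin_right //; lia.
have E2 : ('C(n.+1, 2 * k.+1)%:R : rat)
   = 'C(n.+1, 2 * k + 1)%:R * ((n.+1)%:R - (2 * k + 1)%:R) / (2 * k + 1).+1%:R.
  have -> : (2 * k.+1 = (2 * k + 1).+1)%N by lia.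
  by rewrite bin_right //; lia.
have E3 : ('C(n.+2, 2 * k + 1)%:R : rat) = 'C(n.+1, 2 * k + 1)%:R + 'C(n.+1, 2 * k)%:R.
  by rewrite addn1 binSr.
have E4 : ('C(n, k.+1)%:R : rat) = 'C(n, k)%:R * (n%:R - k%:R) / (k.+1)%:R.
  by rewrite bin_right //; lia.
have E5 : ('C(n.+1, k)%:R : rat) = (n.+1)%:R * 'C(n, k)%:R / ((n.+1)%:R - k%:R).
  by rewrite bin_up //; lia.
rewrite E2 E3 E4 E5 E1.
have hk1 : (2 * k%:R <= n%:R :> rat).
  by have := hk; rewrite -(ler_nat rat) natrM.
have hkn : (k.+1 <= n)%N by lia.
have hk2 : (k%:R + 1 <= n%:R :> rat).
  by have := hkn; rewrite -(ler_nat rat) -addn1 natrD.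
move: hc; set c := 'C(n, k)%:R; set b := 'C(n.+1, 2 * k)%:R => hc.
rewrite !exprS.
rewrite !(natrD, natrM, mulrS).
have := ler0n rat k => ?.
clear E1 E2 E3 E4 E5 hk hkn hn.
field; rewrite ?hc /=; nzs.
Qed.

Definition f2 (n : nat) : rat := \sum_(0 <= k < (n./2).+1)
                    (-1) ^+ k * ('C(n.+1, 2 * k + 1)%:R / 'C(n, k)%:R).

Lemma H0 n : Hk n 0 = - 2 * (n.+1)%:R.
Proof. rewrite /Hk muln0 !bin0 expr0 mulr0 add0n mulrS; field; done. Qed.

Lemma f2_tel n : (0 < n)%N ->
  \sum_(0 <= k < (n./2).+1) (2 * (n.+1)%:R * Fk n.+1 k - (n.+2)%:R * Fk n k)
  = Hk n (n./2).+1 + 2 * (n.+1)%:R.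
Proof.
move=> hn; rewrite (telescope_sumr_eq (Hk n)) //.
  by rewrite H0 mulNr opprK.
move=> k /andP [_ hk]; rewrite H_step //.
have := odd_double_half n; rewrite -muln2; lia.
Qed.

Lemma f2E p : f2 p = \sum_(0 <= k < (p./2).+1) Fk p k.
Proof. by []. Qed.

Lemma f2_rec : Rec f2.
Proof.
case=> [|n]; first by rewrite /f2 /= !big_nat1.
set m := n.+1.
have hm : (0 < m)%N by [].
have tel := f2_tel m hm.
rewrite !f2E.
have e : \sum_(0 <= k < (m./2).+1) (2 * (m.+1)%:R * Fk m.+1 k - (m.+2)%:R * Fk m k)
   = 2 * (m.+1)%:R * \sum_(0 <= k < (m./2).+1) Fk m.+1 k - (m.+2)%:R * \sum_(0 <= k < (m./2).+1) Fk m k.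
  by rewrite sumrB !mulr_sumr.
rewrite e in tel.
have := odd_double_half m; case: (odd m) => hmo.
-
  set h := m./2 in tel hmo *.
  have -> : (m.+1)./2 = h.+1 by rewrite /h; lia.
  rewrite (big_nat_recr h.+1) //= mulrDr.
  have HH : Hk m h.+1 = - (2 * (m.+1)%:R * Fk m.+1 h.+1).
    rewrite /Hk /Fk.
    have -> : (2 * h.+1 + 1 = m.+2)%N by rewrite /h; lia.
    have -> : (2 * h.+1 = m.+1)%N by rewrite /h; lia.
    rewrite !binn.
    have E1 : ('C(m, h.+1)%:R : rat) = 'C(m, h)%:R.
      by rewrite -bin_sub; [congr (_%:R); congr 'C(_, _)|]; rewrite /h; lia.
    have E2 : ('C(m.+1, h.+1)%:R : rat) = (m.+1)%:R * 'C(m, h)%:R / (h.+1)%:R.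
      by rewrite bin_upS.
    have hc : ('C(m, h)%:R : rat) != 0 by apply/natC; rewrite /h; lia.
    have Em : (m%:R : rat) = 2 * h%:R + 1.
      have Em0 : (m = 2 * h + 1)%N by rewrite /h; lia.
      by rewrite {1}Em0 natrD natrM.
    have Em1 : ((m.+1)%:R : rat) = 2 * h%:R + 2 by rewrite mulrS Em; ring.
    have Em2 : ((m.+2)%:R : rat) = 2 * h%:R + 3 by rewrite mulrS Em1; ring.
    rewrite E1 E2 ?Em2 ?Em1 ?Em; move: hc; set c := 'C(m, h)%:R => hc.
    have := ler0n rat h => ?; clear E1 E2 Em Em1 Em2 hmo tel e hm; clearbody h m.
    rewrite !exprS !mulrS.
    field; nzs.
  rewrite HH in tel.
  move: tel; set A := \sum_(0 <= k < h.+1) _; set B := \sum_(0 <= k < h.+1) _ => tel.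
  lra.
- set h := m./2 in tel hmo *.
  have -> : (m.+1)./2 = h by rewrite /h; lia.
  have HH : Hk m h.+1 = 0.
    rewrite /Hk bin_small ?mulr0 ?mul0r //; rewrite /h; lia.
  rewrite HH add0r in tel.
  move: tel; set A := \sum_(0 <= k < h.+1) _; set B := \sum_(0 <= k < h.+1) _ => tel.
  lra.
Qed.

Definition u (m k : nat) : rat := 2 ^+ k / (k%:R * 'C(m + k, k)%:R).
Definition W (m : nat) : rat := \sum_(1 <= k < m.+1) u m k.

Lemma u_step m k : (0 < k)%N -> 2 * u m.+1 k = u m k - (u m k.+1 - u m k).
Proof.
move=> hk; rewrite /u addSn addnS.
rewrite bin_up ?leq_addl // bin_upS.
have hc : ('C(m + k, k)%:R : rat) != 0 by apply/natC; rewrite leq_addl.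
rewrite exprS.
have hk' : (1 : rat) <= k%:R by rewrite ler1n.
field; rewrite hc /=; clear hc hk.
have := ler0n rat m => ?; have := ler0n rat k => ?.
nzs.
Qed.

Lemma W_step m : 2 * W m.+1 = W m + 2 / (m.+1)%:R.
Proof.
rewrite /W mulr_sumr.
rewrite (eq_big_nat _ _ (F2 := fun k => u m k - (u m k.+1 - u m k))); last first.
  by move=> k /andP [hk _]; rewrite u_step.
rewrite sumrB telescope_sumr // (big_nat_recr m.+1) //=.
have e1 : u m 1 = 2 / (m.+1)%:R by rewrite /u addn1 bin1 mul1r expr1.
have e2 : u m m.+2 = u m m.+1.
  rewrite /u !addnS bin_upS.
  have hc : ('C(m + m, m)%:R : rat) != 0 by apply/natC; rewrite leq_addl.
  have hc2 : ('C((m + m).+1, m.+1)%:R : rat) != 0 by apply/natC; lia.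
  have := ler0n rat m => ?.
  rewrite exprS; field; nzs.
rewrite e1 e2; ring.
Qed.

Definition f3 (n : nat) : rat := (n.+1)%:R * \sum_(1 <= k < n.+2)
                    (2 ^+ k / (k%:R * 'C(n.+1 + k, k)%:R)).

Lemma f3_rec : Rec f3.
Proof.
move=> n; rewrite /f3 -/(W n.+1) -/(W n.+2).
have h := W_step n.+1.
have := ler0n rat n => ?.
have -> : W n.+2 = (W n.+1 + 2 / (n.+2)%:R) / 2 by rewrite -h; field.
field; nzs.
Qed.

Definition Pr (n j : nat) : rat := (Pn n j)%:R.

Lemma Pr_S n j : Pr n j.+1 = Pr n j + 'C(n.+1, j.+1)%:R.
Proof. by rewrite /Pr /Pn big_nat_recr //= natrD. Qed.

Lemma Pr_up n j : Pr n.+1 j = 2 * Pr n j - 'C(n.+1, j)%:R.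
Proof.
elim: j => [|j IH].
  rewrite /Pr /Pn !big_nat1 !bin0; rewrite mulrS; ring.
rewrite !Pr_S IH binSr; ring.
Qed.

Definition al (n j : nat) : rat :=
  (- j%:R ^+ 2 + (5 * n%:R + 7) * j%:R - 2 * (n%:R + 1) * (3 * n%:R + 5)) / (2 * n%:R + 3).
Definition be (n j : nat) : rat := (n%:R + 2) * (2 * n%:R + 2 - j%:R) / (2 * n%:R + 3).
Definition G1 (n j : nat) : rat :=
  (al n j * Pr n j + be n j * 'C(n.+1, j)%:R) / 'C(2 * n + 1, j)%:R.
Definition s1 (n j : nat) : rat :=
  2 * (n.+1)%:R * Pr n.+1 j / 'C(2 * n.+1 + 1, j)%:R - (n.+2)%:R * Pr n j / 'C(2 * n + 1, j)%:R.

Lemma G1_step n j : (0 < n)%N -> (j <= n.+1)%N -> G1 n j.+1 - G1 n j = s1 n j.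
Proof.
move=> hn hj; rewrite /G1 /s1 /al /be Pr_up Pr_S.
have hN : (j <= 2 * n + 1)%N by lia.
have hc : ('C(2 * n + 1, j)%:R : rat) != 0 by apply/natC.
have E1 : ('C(n.+1, j.+1)%:R : rat) = 'C(n.+1, j)%:R * ((n.+1)%:R - j%:R) / (j.+1)%:R.
  by rewrite bin_right.
have E2 : ('C(2 * n + 1, j.+1)%:R : rat) = 'C(2 * n + 1, j)%:R * ((2 * n + 1)%:R - j%:R) / (j.+1)%:R.
  by rewrite bin_right.
have E3 : ('C(2 * n.+1 + 1, j)%:R : rat) = (2 * n + 1).+2%:R *
   ((2 * n + 1).+1%:R * 'C(2 * n + 1, j)%:R / ((2 * n + 1).+1%:R - j%:R))
   / ((2 * n + 1).+2%:R - j%:R).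
  have -> : (2 * n.+1 + 1 = (2 * n + 1).+2)%N by lia.
  rewrite bin_up; last by lia.
  by rewrite bin_up.
rewrite E1 E2 E3.
have hj' : (j%:R <= n%:R + 1 :> rat) by rewrite natr1 ler_nat.
have hn' : (1 <= n%:R :> rat) by rewrite ler1n.
move: hc; set cN := 'C(2 * n + 1, j)%:R; set c1 := 'C(n.+1, j)%:R; set p := Pr n j => hc.
have := ler0n rat j => ?.
clear E1 E2 E3 hN hj hn.
rewrite !(natrD, natrM, mulrS).
field; rewrite ?hc /=; nzs.
Qed.

Definition f1 (n : nat) : rat := \sum_(0 <= j < n.+1) \sum_(0 <= i < j.+1)
                    ('C(n.+1, i)%:R / 'C(2 * n + 1, j)%:R).

Lemma f1E n : f1 n = \sum_(0 <= j < n.+1) Pr n j / 'C(2 * n + 1, j)%:R.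
Proof. by apply: eq_bigr => j _; rewrite -mulr_suml /Pr /Pn natr_sum. Qed.

Lemma G1_0 n : G1 n 0 = - 2 * (n.+1)%:R.
Proof.
rewrite /G1 /al /be /Pr /Pn big_nat1 !bin0 mulrS.
have := ler0n rat n => ?.
field; nzs.
Qed.

Lemma G1_end n : (0 < n)%N ->
  G1 n n.+2 = - (n.+2)%:R * Pr n n.+1 / 'C(2 * n + 1, n.+1)%:R.
Proof.
move=> hn; rewrite /G1 Pr_S (bin_small (ltnSn _)) addr0 mulr0 addr0.
rewrite (bin_right (2 * n + 1) n.+1); last by lia.
have hc : ('C(2 * n + 1, n.+1)%:R : rat) != 0 by apply/natC; lia.
move: hc; set c := 'C(2 * n + 1, n.+1)%:R; set p := Pr n n.+1 => hc.
have hn' : (1 <= n%:R :> rat) by rewrite ler1n.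
rewrite /al; clear hn.
rewrite !(natrD, natrM, mulrS).
field; rewrite ?hc /=; nzs.
Qed.

Lemma f1_rec : Rec f1.
Proof.
case=> [|n]; first by rewrite /f1 unlock; vm_compute.
set m := n.+1; have hm : (0 < m)%N by [].
have tel : \sum_(0 <= j < m.+2) s1 m j = G1 m m.+2 - G1 m 0.
  apply: telescope_sumr_eq => // j /andP [_ hj]; rewrite G1_step //.
have eS : \sum_(0 <= j < m.+2) s1 m j = 2 * (m.+1)%:R * f1 m.+1
     - (m.+2)%:R * \sum_(0 <= j < m.+2) Pr m j / 'C(2 * m + 1, j)%:R.
  by rewrite /s1 sumrB f1E !mulr_sumr; congr (_ - _); apply: eq_bigr => j _; rewrite !mulrA.
rewrite eS G1_0 G1_end // (big_nat_recr m.+1) //= -f1E in tel.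
rewrite -(subrK ((m.+2)%:R * (f1 m + Pr m m.+1 / 'C(2 * m + 1, m.+1)%:R)) (2 * (m.+1)%:R * f1 m.+1)) tel.
ring.
Qed.

Lemma f5_rec : Rec f5.
Proof. move=> n; rewrite !f5U; exact: U_rec. Qed.

Lemma f1_0 : f1 0 = 1. Proof. by rewrite /f1 unlock; vm_compute. Qed.
Lemma f2_0 : f2 0 = 1. Proof. by rewrite /f2 unlock; vm_compute. Qed.
Lemma f3_0 : f3 0 = 1. Proof. by rewrite /f3 unlock; vm_compute. Qed.
Lemma f4_0 : f4 0 = 1. Proof. by rewrite /f4 unlock; vm_compute. Qed.
Lemma f5_0 : f5 0 = 1. Proof. by rewrite /f5 unlock; vm_compute. Qed.

Theorem proposition1 (n : nat) :
  let S1 : rat := \sum_(0 <= j < n.+1) \sum_(0 <= i < j.+1)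
                    ('C(n.+1, i)%:R / 'C(2 * n + 1, j)%:R) in
  let S2 : rat := \sum_(0 <= k < (n./2).+1)
                    (-1) ^+ k * ('C(n.+1, 2 * k + 1)%:R / 'C(n, k)%:R) in
  let S3 : rat := (n.+1)%:R * \sum_(1 <= k < n.+2)
                    (2 ^+ k / (k%:R * 'C(n.+1 + k, k)%:R)) in
  let S4 : rat := (n.+1)%:R / 2 ^+ n.+1 * \sum_(1 <= k < n.+2) (2 ^+ k / k%:R) in
  let S5 : rat := 1 / 2 ^+ n * \sum_(0 <= j < n.+1) \sum_(0 <= i < j.+1)
                    ('C(n.+1, i)%:R / 'C(n, j)%:R) in
  [/\ S1 = S2, S2 = S3, S3 = S4 & S4 = S5].
Proof.
have E : forall x y, x 0%N = 1 -> y 0%N = 1 -> Rec x -> Rec y -> forall n, x n = y n.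
  move=> x y hx hy rx ry; apply: rec_uniq => //; by rewrite hx hy.
split.
- exact: (E f1 f2 f1_0 f2_0 f1_rec f2_rec n).
- exact: (E f2 f3 f2_0 f3_0 f2_rec f3_rec n).
- exact: (E f3 f4 f3_0 f4_0 f3_rec f4_rec n).
- exact: (E f4 f5 f4_0 f5_0 f4_rec f5_rec n).
Qed.
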